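(* Let $V$ be a vertex operator algebra of CFT type and $M=\bigoplus_{n\ge0}M(n)$ an admissible $V$-module strongly generated by $W\subseteq M$. Then $\mathrm{gr}\,A(M)$ is generated as a $\mathrm{gr}\,A(V)$-module by $\psi(\{w+C_2(M):w\in W\})$. In particular, if $M$ is strongly finitely generated, then $\mathrm{gr}\,A(M)$ is a finitely generated $\mathrm{gr}\,A(V)$-module.
   Context: $V_0=\mathbb{C}\mathbf{1}$, $V_+=\bigoplus_{n\ge1}V_n$, $Y_M(a,z)=\sum_na_nz^{-n-1}$. $M$ is strongly generated by $W$ if it is spanned by $a^1_{-n_1}\cdots a^k_{-n_k}w$ with $k\ge0$, $a^i\in V_+$ homogeneous, $n_i\ge1$, $w\in W$; strongly finitely generated means strongly generated by a finite set. $C_2(M)=\mathrm{span}\{a_{-2}v:a\in V,v\in M\}$. Zhu's algebra $A(V)=V/O(V)$ (product $a\ast b=\mathrm{Res}_zY(a,z)b\frac{(1+z)^{\mathrm{wt} a}}{z}$) is filtered by $A(V)_n=$ image of $\bigoplus_{i\le n}V_i$. $A(M)=M/O(M)$, $O(M)$ spanned by $\mathrm{Res}_zY_M(a,z)v\frac{(1+z)^{\mathrm{wt} a}}{z^2}$, is an $A(V)$-bimodule ($a\ast v=\mathrm{Res}_zY_M(a,z)v\frac{(1+z)^{\mathrm{wt} a}}{z}$, $v\ast a=\mathrm{Res}_zY_M(a,z)v\frac{(1+z)^{\mathrm{wt} a-1}}{z}$), filtered by $A(M)_n=$ image of $\bigoplus_{i=0}^nM(i)$; $\mathrm{gr}\,A(M)=\bigoplus_nA(M)_n/A(M)_{n-1}$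 is a graded $\mathrm{gr}\,A(V)$-module with $\bar a\ast\bar v=\overline{a_{-1}v}=\bar v\ast\bar a$. $\psi:M/C_2(M)\to\mathrm{gr}\,A(M)$ is the linear map $v+C_2(M)\mapsto\bar v\in A(M)_m/A(M)_{m-1}$ for $v\in M(m)$. *)

(* Defs.v *)
From mathcomp Require Import all_boot all_algebra.
From Stdlib Require List.
From mathcomp Require Import complex reals.
Set Implicit Arguments. Unset Strict Implicit. Unset Printing Implicit Defensive.
Import GRing.Theory Num.Theory.
Local Open Scope ring_scope.

Section VOADefs.
Variable C : fieldType.

Definition binz (r : int) (i : nat) : C :=
  (\prod_(k < i) ((r - (k : nat)%:Z)%:~R : C)) / (i`!)%:R.

(* A grading  X = (+)_{n >= 0} X_n  given by its family of projections pi n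
   (X_n = image of pi n): linear, orthogonal idempotents, and every vector is
   the finite sum of its homogeneous components. *)
Definition grading (X : lmodType C) (pi : nat -> X -> X) : Prop :=
  [/\ forall n (k : C) (x y : X), pi n (k *: x + y) = k *: pi n x + pi n y,
      forall n m (x : X), pi n (pi m x) = if n == m then pi m x else 0
    & forall x : X, exists N, x = \sum_(n < N) pi n x].

(* the modes  Y(a,z)v = sum_n a_n v z^{-n-1}  with a_n v = Y a n v : bilinear *)
Definition bilinear_modes (V X : lmodType C) (Y : V -> int -> X -> X) : Prop :=
  (forall n (k : C) a b x, Y (k *: a + b) n x = k *: Y a n x + Y b n x) /\
  (forall n (k : C) a x y, Y a n (k *: x + y) = k *: Y a n x + Y a n y).

Definition truncation (V X : lmodType C) (Y : V -> int -> X -> X) : Prop :=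
  forall a x, exists N : int, forall n : int, N <= n -> Y a n x = 0.

(* By truncation both sums are finite; we require equality of all partial sums
   beyond some bound. *)
Definition jacobi (V X : lmodType C) (Y : V -> int -> V -> V)
    (YX : V -> int -> X -> X) : Prop :=
  forall (a b : V) (x : X) (p q r : int), exists N0 : nat, forall N : nat, (N0 <= N)%N ->
    \sum_(i < N) binz p i *: YX (Y a (r + (i : nat)%:Z) b) (p + q - (i : nat)%:Z) x
    = \sum_(i < N) (((-1) ^+ i) * binz r i) *:
        (YX a (p + r - (i : nat)%:Z) (YX b (q + (i : nat)%:Z) x)
         - ((-1) ^ r) *: YX b (q + r - (i : nat)%:Z) (YX a (p + (i : nat)%:Z) x)).

Definition is_VOA_CFT (V : lmodType C) (Y : V -> int -> V -> V) (vac omega : V)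
    (c : C) (pi : nat -> V -> V) : Prop :=
  let L (n : int) := Y omega (n + 1) in
  [/\ [/\ grading pi, bilinear_modes Y, truncation Y & jacobi Y Y],
      (forall n, exists s : seq V, forall v, exists k : 'I_(size s) -> C,
          pi n v = \sum_(i < size s) k i *: s`_i),
      [/\ forall n v, Y vac n v = (if n == -1 then v else 0),
          forall a, Y a (-1) vac = a
        & forall a (n : int), 0 <= n -> Y a n vac = 0],
      (* CFT type: V_0 = C 1 (and V_n = 0 for n < 0 is built into the N-grading) *)
      (vac != 0 /\ (forall v, exists k : C, pi 0 v = k *: vac))
    &
      [/\ pi 2 omega = omega,
          forall (m n : int) v, L m (L n v) - L n (L m v) =
            (m - n)%:~R *: L (m + n) v
            + (if m + n == 0 then ((m ^+ 3 - m)%:~R / 12%:R) * c else 0) *: v,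
          forall n v, L 0 (pi n v) = n%:R *: pi n v
        & forall a (n : int) v, Y (L (-1) a) n v = - n%:~R *: Y a (n - 1) v]].

Definition is_admissible (V : lmodType C) (Y : V -> int -> V -> V) (vac : V)
    (pi : nat -> V -> V) (M : lmodType C) (YM : V -> int -> M -> M)
    (piM : nat -> M -> M) : Prop :=
  [/\ bilinear_modes YM /\ truncation YM,
      forall n w, YM vac n w = (if n == -1 then w else 0),
      jacobi Y YM,
      grading piM
    & forall (k n j : nat) (a : V) (m : int) (w : M),
        pi k a = a -> piM n w = w ->
        piM j (YM a m w) = (if j%:Z == k%:Z - m - 1 + n%:Z then YM a m w else 0)].

Definition in_Vplus_hom (V : lmodType C) (pi : nat -> V -> V) (a : V) : Prop :=
  exists k : nat, (0 < k)%N /\ pi k a = a.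

(* a^1_{-n_1} ... a^k_{-n_k} w, the list s storing pairs (a^i, n_i - 1) *)
Definition monomial (V M : lmodType C) (YM : V -> int -> M -> M)
    (s : seq (V * nat)) (w : M) : M :=
  foldr (fun an x => YM an.1 (- (an.2.+1 : nat)%:Z) x) w s.

Definition strongly_generated (V M : lmodType C) (pi : nat -> V -> V)
    (YM : V -> int -> M -> M) (W : M -> Prop) : Prop :=
  forall x : M, exists (K : nat) (k : 'I_K -> C) (s : 'I_K -> seq (V * nat))
      (w : 'I_K -> M),
    (forall i, W (w i) /\ (forall an, List.In an (s i) -> in_Vplus_hom pi an.1)) /\
    x = \sum_(i < K) k i *: monomial YM (s i) (w i).

Definition strongly_fin_generated (V M : lmodType C) (pi : nat -> V -> V)
    (YM : V -> int -> M -> M) : Prop :=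
  exists S : seq M, strongly_generated pi YM (fun w => List.In w S).

(* Res_z Y_M(a,z)v (1+z)^{wt a}/z^2 = sum_{j=0}^{wt a} binom(wt a, j) a_{j-2} v *)
Definition circM (V M : lmodType C) (YM : V -> int -> M -> M) (a : V) (wt : nat)
    (v : M) : M :=
  \sum_(j < wt.+1) ('C(wt, j))%:R *: YM a ((j : nat)%:Z - 2) v.

Definition inOM (V M : lmodType C) (pi : nat -> V -> V) (YM : V -> int -> M -> M)
    (x : M) : Prop :=
  exists (K : nat) (k : 'I_K -> C) (a : 'I_K -> V) (wt : 'I_K -> nat) (v : 'I_K -> M),
    (forall i, pi (wt i) (a i) = a i) /\
    x = \sum_(i < K) k i *: circM YM (a i) (wt i) (v i).

(* preimage in M of A(M)_{n-1} (for n = 0 this is O(M), i.e. A(M)_{-1} = 0):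
   x = o + y with o in O(M) and y in (+)_{i < n} M(i) *)
Definition filtM_pred (V M : lmodType C) (pi : nat -> V -> V)
    (YM : V -> int -> M -> M) (piM : nat -> M -> M) (n : nat) (x : M) : Prop :=
  exists o : M, inOM pi YM o /\ forall j : nat, (n <= j)%N -> piM j (x - o) = 0.

(* Elements of gr A(M) = (+)_n A(M)_n/A(M)_{n-1} are represented by families
   X : nat -> M with X n in M(n) (representing the class of X n in
   A(M)_n/A(M)_{n-1}), finitely many nonzero. *)
Definition gr_elem (M : lmodType C) (piM : nat -> M -> M) (X : nat -> M) : Prop :=
  (forall n, piM n (X n) = X n) /\ exists N, forall n, (N <= n)%N -> X n = 0.

Definition gr_eq (V M : lmodType C) (pi : nat -> V -> V) (YM : V -> int -> M -> M)
    (piM : nat -> M -> M) (X Z : nat -> M) : Prop :=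
  forall n, filtM_pred pi YM piM n (X n - Z n).

(* psi(w + C_2(M)) : the image of w, i.e. the sum over m of the class of its
   component w_m in A(M)_m/A(M)_{m-1} *)
Definition psi (M : lmodType C) (piM : nat -> M -> M) (w : M) : nat -> M :=
  fun n => piM n w.

(* action of abar in gr A(V)_i (a in V_i) on gr A(M): abar * vbar = class of a_{-1} v *)
Definition gr_act (V M : lmodType C) (YM : V -> int -> M -> M) (a : V) (i : nat)
    (X : nat -> M) : nat -> M :=
  fun n => if (i <= n)%N then YM a (-1) (X (n - i)%N) else 0.

(* Every element of gr A(V) is a finite sum of abar with a in V_i homogeneous
   (A(V)_i/A(V)_{i-1} is the image of V_i), so the submodule generated by G is
   the set of finite sums  sum_k c_k abar_k * g_k  with g_k in G. *)
Definition gr_generated_by (V M : lmodType C) (pi : nat -> V -> V)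
    (YM : V -> int -> M -> M) (piM : nat -> M -> M) (G : (nat -> M) -> Prop) : Prop :=
  forall X : nat -> M, gr_elem piM X ->
    exists (K : nat) (k : 'I_K -> C) (a : 'I_K -> V) (i : 'I_K -> nat)
      (g : 'I_K -> (nat -> M)),
      (forall t, pi (i t) (a t) = a t /\ G (g t)) /\
      gr_eq pi YM piM X (fun n => \sum_(t < K) k t *: gr_act YM (a t) (i t) (g t) n).

Definition psi_image (M : lmodType C) (piM : nat -> M -> M) (W : M -> Prop) :
    (nat -> M) -> Prop :=
  fun X => exists w, W w /\ X = psi piM w.

Definition gr_fin_generated (V M : lmodType C) (pi : nat -> V -> V)
    (YM : V -> int -> M -> M) (piM : nat -> M -> M) : Prop :=
  exists S : seq (nat -> M), (forall X, List.In X S -> gr_elem piM X) /\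
    gr_generated_by pi YM piM (fun X => List.In X S).

End VOADefs.

(* Main.v *)
Require Import Defs.
From mathcomp Require Import all_boot all_algebra.
From mathcomp Require Import complex reals.
From mathcomp Require Import zify ring.
Set Implicit Arguments. Unset Strict Implicit. Unset Printing Implicit Defensive.
Import GRing.Theory Num.Theory.
Local Open Scope ring_scope.

Section Lin.
Variables (C : fieldType) (X X' : lmodType C) (f : X -> X').
Hypothesis Hf : forall k x y, f (k *: x + y) = k *: f x + f y.
Lemma lin0 : f 0 = 0.
Proof.
have h := Hf 1 0 0; rewrite scaler0 add0r scale1r in h.
by apply: (addrI (f 0)); rewrite addr0 -h.
Qed.
Lemma linD x y : f (x + y) = f x + f y.
Proof. by have := Hf 1 x y; rewrite !scale1r. Qed.
Lemma linZ k x : f (k *: x) = k *: f x.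
Proof. by have := Hf k x 0; rewrite !addr0 lin0 addr0. Qed.
Lemma linN x : f (- x) = - f x.
Proof. by rewrite -scaleN1r linZ scaleN1r. Qed.
Lemma linB x y : f (x - y) = f x - f y.
Proof. by rewrite linD linN. Qed.
Lemma lin_sum K (F : 'I_K -> X) : f (\sum_(i < K) F i) = \sum_(i < K) f (F i).
Proof. exact: (big_morph f linD lin0). Qed.
End Lin.

Definition catf (T : Type) K1 K2 (f1 : 'I_K1 -> T) (f2 : 'I_K2 -> T)
  (j : 'I_(K1 + K2)) : T :=
  match split j with inl a => f1 a | inr b => f2 b end.
Lemma catf_l T K1 K2 (f1 : 'I_K1 -> T) (f2 : 'I_K2 -> T) i :
  catf f1 f2 (lshift K2 i) = f1 i.
Proof. by rewrite /catf (unsplitK (inl _ i)). Qed.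
Lemma catf_r T K1 K2 (f1 : 'I_K1 -> T) (f2 : 'I_K2 -> T) i :
  catf f1 f2 (rshift K1 i) = f2 i.
Proof. by rewrite /catf (unsplitK (inr _ i)). Qed.
Lemma catf_P T K1 K2 (f1 : 'I_K1 -> T) (f2 : 'I_K2 -> T) (Q : T -> Prop) :
  (forall i, Q (f1 i)) -> (forall i, Q (f2 i)) -> forall j, Q (catf f1 f2 j).
Proof. by move=> h1 h2 j; rewrite /catf; case: split. Qed.
Lemma bump0S i : bump 0 i = i.+1. Proof. by []. Qed.

Section Main.
Variables (C : numFieldType) (V M : lmodType C).
Variables (Y : V -> int -> V -> V) (vac omega : V) (c : C) (pi : nat -> V -> V).
Variables (YM : V -> int -> M -> M) (piM : nat -> M -> M).
Hypothesis Y1 : forall n (k : C) a b x, Y (k *: a + b) n x = k *: Y a n x + Y b n x.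
Hypothesis Y2 : forall n (k : C) a x y, Y a n (k *: x + y) = k *: Y a n x + Y a n y.
Hypothesis YM1 : forall n (k : C) a b x, YM (k *: a + b) n x = k *: YM a n x + YM b n x.
Hypothesis YM2 : forall n (k : C) a x y, YM a n (k *: x + y) = k *: YM a n x + YM a n y.
Hypothesis pi1 : forall n (k : C) (x y : V), pi n (k *: x + y) = k *: pi n x + pi n y.
Hypothesis pi2 : forall n m (x : V), pi n (pi m x) = if n == m then pi m x else 0.
Hypothesis pi3 : forall x : V, exists N, x = \sum_(n < N) pi n x.
Hypothesis piM1 : forall n (k : C) (x y : M), piM n (k *: x + y) = k *: piM n x + piM n y.
Hypothesis piM2 : forall n m (x : M), piM n (piM m x) = if n == m then piM m x else 0.
Hypothesis piM3 : forall x : M, exists N, x = \sum_(n < N) piM n x.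
Hypothesis Hjac : jacobi Y YM.
Hypothesis HvacM : forall n w, YM vac n w = (if n == -1 then w else 0).
Hypothesis Hdeg : forall (k n j : nat) (a : V) (m : int) (w : M),
        pi k a = a -> piM n w = w ->
        piM j (YM a m w) = (if j%:Z == k%:Z - m - 1 + n%:Z then YM a m w else 0).
Hypothesis Yvac2 : forall a, Y a (-1) vac = a.
Hypothesis Yvac3 : forall a (n : int), 0 <= n -> Y a n vac = 0.
Hypothesis Hvir : forall (m n : int) v, Y omega (m + 1) (Y omega (n + 1) v)
   - Y omega (n + 1) (Y omega (m + 1) v) =
            (m - n)%:~R *: Y omega (m + n + 1) v
            + (if m + n == 0 then ((m ^+ 3 - m)%:~R / 12%:R) * c else 0) *: v.
Hypothesis HL0 : forall n v, Y omega (0 + 1) (pi n v) = n%:R *: pi n v.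
Hypothesis HLm1 : forall a (n : int) v, Y (Y omega (-1 + 1) a) n v = - n%:~R *: Y a (n - 1) v.

Let YMr a n := fun k x y => YM2 n k a x y.
Let YMl n x := fun k a b => YM1 n k a b x.
Let Yr a n := fun k x y => Y2 n k a x y.
Let Yl n x := fun k a b => Y1 n k a b x.
Let piL n := fun k x y => pi1 n k x y.
Let piML n := fun k x y => piM1 n k x y.

Definition Low n (x : M) := filtM_pred pi YM piM n x.

Lemma inOM0 : inOM pi YM 0.
Proof.
exists 0%N, (fun _ => 0), (fun _ => 0), (fun _ => 0%N), (fun _ => 0).
by split; [case | rewrite big_ord0].
Qed.

Lemma inOMD x y : inOM pi YM x -> inOM pi YM y -> inOM pi YM (x + y).
Proof.
move=> [K1 [k1 [a1 [w1 [v1 [h1 ->]]]]]] [K2 [k2 [a2 [w2 [v2 [h2 ->]]]]]].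
exists (K1 + K2)%N, (catf k1 k2), (catf a1 a2), (catf w1 w2), (catf v1 v2).
split; first by move=> j; rewrite /catf; case: split.
by rewrite big_split_ord /=; congr (_ + _); apply: eq_bigr => i _;
  rewrite ?catf_l ?catf_r.
Qed.

Lemma inOMZ (k : C) x : inOM pi YM x -> inOM pi YM (k *: x).
Proof.
move=> [K1 [k1 [a1 [w1 [v1 [h1 ->]]]]]].
exists K1, (fun i => k * k1 i), a1, w1, v1; split => //.
by rewrite scaler_sumr; apply: eq_bigr => i _; rewrite scalerA.
Qed.

Lemma Low0 n : Low n 0.
Proof. by exists 0; split; [exact: inOM0 | move=> j _; rewrite subr0 (lin0 (piML j))]. Qed.

Lemma LowD n x y : Low n x -> Low n y -> Low n (x + y).
Proof.
move=> [o1 [h1 e1]] [o2 [h2 e2]]; exists (o1 + o2); split; first exact: inOMD.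
by move=> j hj; rewrite opprD addrACA (linD (piML j)) e1 // e2 // addr0.
Qed.

Lemma LowZ n k x : Low n x -> Low n (k *: x).
Proof.
move=> [o1 [h1 e1]]; exists (k *: o1); split; first exact: inOMZ.
by move=> j hj; rewrite -scalerBr (linZ (piML j)) e1 // scaler0.
Qed.

Lemma Low_sum n K (F : 'I_K -> M) : (forall i, Low n (F i)) -> Low n (\sum_(i < K) F i).
Proof. by move=> h; apply: big_ind => //; [exact: Low0 | exact: LowD]. Qed.

Lemma Low_deg n x : (forall j, (n <= j)%N -> piM j x = 0) -> Low n x.
Proof. by move=> h; exists 0; split; [exact: inOM0 | move=> j hj; rewrite subr0 h]. Qed.

Definition span (P : M -> Prop) (x : M) := exists K (k : 'I_K -> C) (g : 'I_K -> M),
  (forall i, P (g i)) /\ x = \sum_(i < K) k i *: g i.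

Lemma span0 P : span P 0.
Proof. by exists 0%N, (fun _ => 0), (fun _ => 0); split; [case | rewrite big_ord0]. Qed.

Lemma spanD P x y : span P x -> span P y -> span P (x + y).
Proof.
move=> [K1 [k1 [g1 [h1 ->]]]] [K2 [k2 [g2 [h2 ->]]]].
exists (K1 + K2)%N, (catf k1 k2), (catf g1 g2); split; first exact: catf_P.
by rewrite big_split_ord /=; congr (_ + _); apply: eq_bigr => i _;
  rewrite ?catf_l ?catf_r.
Qed.

Lemma spanZ P k x : span P x -> span P (k *: x).
Proof.
move=> [K1 [k1 [g1 [h1 ->]]]]; exists K1, (fun i => k * k1 i), g1; split => //.
by rewrite scaler_sumr; apply: eq_bigr => i _; rewrite scalerA.
Qed.

Lemma spanN P x : span P x -> span P (- x).
Proof. by move=> h; rewrite -scaleN1r; exact: spanZ. Qed.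

Lemma spanB P x y : span P x -> span P y -> span P (x - y).
Proof. by move=> hx hy; apply: spanD => //; exact: spanN. Qed.

Lemma span1 (P : M -> Prop) x : P x -> span P x.
Proof.
move=> h; exists 1%N, (fun _ => 1), (fun _ => x); split => //.
by rewrite big_ord1 scale1r.
Qed.

Lemma span_sum P K (F : 'I_K -> M) : (forall i, span P (F i)) -> span P (\sum_(i < K) F i).
Proof. by move=> h; apply: big_ind => //; [exact: span0 | exact: spanD]. Qed.

Lemma piM_hom n x : piM n (piM n x) = piM n x.
Proof. by rewrite piM2 eqxx. Qed.
Lemma pi_hom n x : pi n (pi n x) = pi n x.
Proof. by rewrite pi2 eqxx. Qed.


Lemma binz_0 (p : int) : binz C p 0 = 1.
Proof. by rewrite /binz big_ord0 fact0 divr1. Qed.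
Lemma binz0S i : binz C 0 i.+1 = 0.
Proof. by rewrite /binz big_ord_recl /= subr0 mul0r mul0r. Qed.
Lemma binz_1 (p : int) : binz C p 1 = p%:~R.
Proof. by rewrite /binz big_ord1 /= subr0 divr1. Qed.

Lemma COMM a c' y m k : exists N,
  YM a m (YM c' k y) - YM c' k (YM a m y) =
  \sum_(i < N) binz C m i *: YM (Y a (0 + (i : nat)%:Z) c') (m + k - (i : nat)%:Z) y.
Proof.
have [N0 hN] := Hjac a c' y m k 0.
exists N0.+1; rewrite hN // big_ord_recl big1 ?addr0.
  by rewrite /= expr0 binz_0 mulr1 expr0z !scale1r.
by move=> i _; rewrite binz0S mulr0 scale0r.
Qed.

Lemma JK a b u r : exists N,
  YM (Y a r b) (-1) u = \sum_(i < N.+1) (((-1) ^+ i) * binz C r i) *: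
        (YM a (0 + r - (i : nat)%:Z) (YM b (-1 + (i : nat)%:Z) u)
         - ((-1) ^ r) *: YM b (-1 + r - (i : nat)%:Z) (YM a (0 + (i : nat)%:Z) u)).
Proof.
have [N0 hN] := Hjac a b u 0 (-1) r.
exists N0; rewrite -hN // big_ord_recl big1 ?addr0.
  by rewrite /= binz_0 scale1r sub0r.
by move=> i _; rewrite binz0S scale0r.
Qed.

Lemma MD a (n : int) x : YM (Y a (-2) vac) n x = - n%:~R *: YM a (n - 1) x.
Proof.
have [N0 hN] := Hjac a vac x (n + 1) (-1) (-2).
have := hN N0.+2 (leqW (leqnSn _)).
rewrite big_ord_recl big_ord_recl big1; last first.
  move=> i _; rewrite Yvac3; last by rewrite !lift0; lia.
  by rewrite (lin0 (YMl _ _)) scaler0.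
rewrite big_ord_recl big1; last first.
  move=> i _; rewrite !HvacM.
  have -> : (-1 + (lift ord0 i : nat)%:Z == -1) = false by rewrite !lift0; lia.
  have -> : (-1 + -2 - (lift ord0 i : nat)%:Z == -1) = false by rewrite !lift0; lia.
  by rewrite scaler0 subr0 (lin0 (YMr _ _)) scaler0.
rewrite /= !addr0 binz_0 binz_1 Yvac2 !HvacM /=.
rewrite expr0 mul1r binz_0 scaler0 subr0 !scale1r.
have -> : bump 0 0 = 1%N by [].
have -> : n + 1 - 1 - 1%N%:Z = n - 1 by lia.
have -> : n + 1 - 1 = n by lia.
have -> : n + 1 - 2 = n - 1 by lia.
move/(canRL (addrK _)) ->.
rewrite -{1}(scale1r (YM a (n - 1) x)) -scalerBl.
congr (_ *: _); rewrite intrD; ring.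
Qed.

Lemma pi_L0 m v : pi m (Y omega (0 + 1) v) = m%:R *: pi m v.
Proof.
have [N hN] := pi3 v; rewrite hN.
rewrite (lin_sum (Yr _ _)) !(lin_sum (piL _)) scaler_sumr; apply: eq_bigr => j _.
rewrite HL0 (linZ (piL _)) pi2; case: eqP => [->//|_]; by rewrite !scaler0.
Qed.

Lemma Lraise e a : pi e a = a -> pi e.+1 (Y omega (-1 + 1) a) = Y omega (-1 + 1) a.
Proof.
move=> ha; set v := Y omega (-1 + 1) a.
have h0 : Y omega (0 + 1) a = e%:R *: a by rewrite -{1}ha HL0 ha.
have hL : Y omega (0 + 1) v = (e.+1)%:R *: v.
  have := Hvir 0 (-1) a; rewrite h0 (linZ (Yr _ _)) -/v.
  have -> : (0 - -1 : int) = 1 by [].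
  have -> : (0 - 1 == 0 :> int) = false by [].
  rewrite scale1r scale0r addr0 => /(canRL (subrK _)) ->.
  by rewrite -natr1 scalerDl scale1r addrC.
have hz : forall m, m != e.+1 -> pi m v = 0.
  move=> m hm; have := pi_L0 m v; rewrite hL (linZ (piL _)) => /eqP.
  rewrite -subr_eq0 -scalerBl scaler_eq0 subr_eq0 eqr_nat eq_sym (negbTE hm) /=.
  by move/eqP.
have [N hN] := pi3 v.
rewrite [in RHS]hN [in LHS]hN (lin_sum (piL _)); apply: eq_bigr => j _.
rewrite pi2; case: eqP => [//|/eqP h]; rewrite hz // eq_sym //.
Qed.

Lemma F1_2 e a q y : pi e a = a -> piM q y = y ->
  Low (e + 2 - 1 + q) (YM a (- (2%N)%:Z) y).
Proof.
move=> ha hy; exists (circM YM a e y); split.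
  exists 1%N, (fun _ => 1), (fun _ => a), (fun _ => e), (fun _ => y); split => //.
  by rewrite big_ord1 scale1r.
move=> j hj; rewrite /circM big_ord_recl /= bin0 scale1r.
have -> : ((0%N)%:Z - 2 : int) = - (2%N)%:Z by [].
rewrite opprD addrA subrr sub0r (linN (piML _)) (lin_sum (piML _)) big1 ?oppr0 //.
move=> i _; rewrite (linZ (piML _)) (Hdeg _ _ ha hy).
case: eqP => h; last by rewrite scaler0.
have eb : bump 0 i = i.+1 by [].
by exfalso; move: h hj; rewrite eb; lia.
Qed.

Lemma F1 k : (2 <= k)%N -> forall e a q y, pi e a = a -> piM q y = y ->
  Low (e + k - 1 + q) (YM a (- k%:Z) y).
Proof.
elim: k => [//|k IH] hk e a q y ha hy.
case: (ltnP k 2) => hk2.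
  have -> : k = 1%N by lia.
  exact: F1_2.
set a' := Y a (-2) vac.
have ha' : pi e.+1 a' = a'.
  have -> : a' = Y omega (-1 + 1) a.
    rewrite /a'; have := HLm1 a (-1) vac; rewrite Yvac2 => ->.
    have -> : (-1 - 1 : int) = -2 by [].
    by rewrite intrN opprK scale1r.
  exact: Lraise.
have := IH hk2 e.+1 a' q y ha' hy; rewrite MD.
have -> : (- k%:Z - 1 : int) = - (k.+1)%:Z by lia.
have -> : - (- k%:Z)%:~R = k%:R :> C by rewrite intrN opprK.
have -> : (e.+1 + k - 1 + q = e + k.+1 - 1 + q)%N by lia.
move=> h; have hk0 : k%:R != 0 :> C by rewrite pnatr_eq0; lia.
rewrite -[YM a _ y](scalerK hk0); exact: LowZ.
Qed.

Definition Cgen (x : M) := exists a (k : int) y, k <= -2 /\ x = YM a k y.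
Definition Cset := span Cgen.

Lemma Cset_gen a k y : k <= -2 -> Cset (YM a k y).
Proof. by move=> hk; apply: span1; exists a, k, y. Qed.

Lemma Cset_act a m t : m <= -1 -> Cset t -> Cset (YM a m t).
Proof.
move=> hm [K [k [g [hg ->]]]]; rewrite (lin_sum (YMr _ _)); apply: span_sum => i.
rewrite (linZ (YMr _ _)); apply: spanZ.
have [c' [k' [y [hk ->]]]] := hg i.
have [N hN] := COMM a c' y m k'.
have -> : YM a m (YM c' k' y) = YM c' k' (YM a m y) +
  \sum_(i < N) binz C m i *: YM (Y a (0 + (i : nat)%:Z) c') (m + k' - (i : nat)%:Z) y.
  by rewrite -hN addrC subrK.
apply: spanD; first exact: Cset_gen.
by apply: span_sum => i0; apply: spanZ; apply: Cset_gen; lia.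
Qed.

Lemma KEY s u : Cset (monomial YM s u - YM (monomial Y s vac) (-1) u).
Proof.
elim: s => [|[a n] s IH].
  by rewrite /monomial /= HvacM eqxx subrr; exact: span0.
rewrite /monomial /= -/(monomial YM s u) -/(monomial Y s vac).
set b := monomial Y s vac; set r : int := - (n.+1)%:Z; set mu := monomial YM s u.
have hr : r <= -1 by rewrite /r; lia.
have [N hN] := JK a b u r; rewrite hN big_ord_recl /= expr0 mul1r binz_0 scale1r.
have -> : (0 + r - (0%N)%:Z) = r by rewrite add0r subr0.
have -> : (-1 + (0%N)%:Z) = -1 by rewrite addr0.
set Z := YM b (-1) u.
set W := YM b (-1 + r - (0%N)%:Z) (YM a (0 + (0%N)%:Z) u).
set S := \sum_(i < N) _.
have -> : YM a r mu - (YM a r Z - (-1) ^ r *: W + S) =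
    YM a r (mu - Z) + (-1) ^ r *: W - S.
  rewrite (linB (YMr _ _)) opprD opprB !addrA; congr (_ - _); exact: addrAC.
apply: spanB; first apply: spanD.
- exact: Cset_act.
- by apply: spanZ; apply: Cset_gen; rewrite /r; lia.
- apply: span_sum => i; apply: spanZ; apply: spanB.
    by apply: Cset_gen; rewrite ?bump0S ?lift0 /r; lia.
  by apply: spanZ; apply: Cset_gen; rewrite ?bump0S ?lift0 /r; lia.
Qed.

Lemma Cset_low t n : Cset t -> Low n (piM n t).
Proof.
move=> [K [k [g [hg ->]]]]; rewrite (lin_sum (piML _)); apply: Low_sum => i.
rewrite (linZ (piML _)); apply: LowZ.
have [a [k' [y [hk ->]]]] := hg i.
have [E hE] := pi3 a; have [Q hQ] := piM3 y.
rewrite hE hQ (lin_sum (YMl _ _)) (lin_sum (piML _)); apply: Low_sum => e.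
rewrite (lin_sum (YMr _ _)) (lin_sum (piML _)); apply: Low_sum => q.
rewrite (Hdeg _ _ (pi_hom e a) (piM_hom q y)); case: eqP => h; last exact: Low0.
case: k' hk h => [p|p] hk h; first by exfalso; lia.
rewrite NegzE in h *.
have -> : n = (e + p.+1 - 1 + q)%N by lia.
by apply: F1; [lia | exact: pi_hom | exact: piM_hom].
Qed.

Lemma PROJ1 e a w n : pi e a = a ->
  piM n (YM a (-1) w) = gr_act YM a e (psi piM w) n.
Proof.
move=> ha; rewrite /gr_act /psi; have [Q hQ] := piM3 w; rewrite hQ.
rewrite (lin_sum (YMr _ _)) (lin_sum (piML _)).
case: leqP => hen.
  rewrite (lin_sum (piML _)) (lin_sum (YMr _ _)); apply: eq_bigr => q _.
  rewrite (Hdeg _ _ ha (piM_hom q w)) piM2.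
  by case: eqP => h1; case: eqP => h2; rewrite ?(lin0 (YMr _ _)) //; exfalso; lia.
apply: big1 => q _; rewrite (Hdeg _ _ ha (piM_hom q w)).
by case: eqP => h //; exfalso; lia.
Qed.

Lemma PROJ z w n E : z = \sum_(e < E) pi e z ->
  piM n (YM z (-1) w) = \sum_(e < E) gr_act YM (pi e z) e (psi piM w) n.
Proof.
move=> hz; rewrite {1}hz (lin_sum (YMl _ _)) (lin_sum (piML _)).
by apply: eq_bigr => e _; apply: PROJ1; exact: pi_hom.
Qed.

Definition Rep (G : (nat -> M) -> Prop) (F : nat -> M) :=
  exists K (k : 'I_K -> C) (a : 'I_K -> V) (i : 'I_K -> nat) (g : 'I_K -> nat -> M),
    (forall t, pi (i t) (a t) = a t /\ G (g t)) /\
    forall n, F n = \sum_(t < K) k t *: gr_act YM (a t) (i t) (g t) n.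

Lemma Rep_ext G F F' : (forall n, F n = F' n) -> Rep G F -> Rep G F'.
Proof.
move=> e [K [k [a [i [g [h1 h2]]]]]]; exists K, k, a, i, g; split => // n.
by rewrite -e h2.
Qed.

Lemma Rep0 G : Rep G (fun _ => 0).
Proof.
exists 0%N, (fun _ => 0), (fun _ => 0), (fun _ => 0%N), (fun _ _ => 0).
by split; [case | move=> n; rewrite big_ord0].
Qed.

Lemma RepD G F1 F2 : Rep G F1 -> Rep G F2 -> Rep G (fun n => F1 n + F2 n).
Proof.
move=> [K1 [k1 [a1 [i1 [g1 [h1 e1]]]]]] [K2 [k2 [a2 [i2 [g2 [h2 e2]]]]]].
exists (K1 + K2)%N, (catf k1 k2), (catf a1 a2), (catf i1 i2), (catf g1 g2).
split; first by move=> j; rewrite /catf; case: split.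
move=> n; rewrite e1 e2 big_split_ord /=; congr (_ + _); apply: eq_bigr => j _;
  by rewrite ?catf_l ?catf_r.
Qed.

Lemma Rep1 G (k : C) a e g : pi e a = a -> G g ->
  Rep G (fun n => k *: gr_act YM a e g n).
Proof.
move=> ha hg; exists 1%N, (fun _ => k), (fun _ => a), (fun _ => e), (fun _ => g).
by split => // n; rewrite big_ord1.
Qed.

Lemma Rep_sum G K (F : 'I_K -> nat -> M) : (forall i, Rep G (F i)) ->
  Rep G (fun n => \sum_(i < K) F i n).
Proof.
elim: K F => [|K IH] F h.
  by apply: Rep_ext (Rep0 G) => n; rewrite big_ord0.
apply: Rep_ext (RepD (IH (fun i => F (widen_ord (leqnSn K) i)) (fun i => h _)) (h ord_max)).
by move=> n; rewrite big_ord_recr.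
Qed.

Lemma part1 W : strongly_generated pi YM W ->
  gr_generated_by pi YM piM (psi_image piM W).
Proof.
move=> hSG X [hX1 [N hN]].
pose x := \sum_(n < N) X n.
have hxn : forall n, piM n x = X n.
  move=> n; rewrite (lin_sum (piML _)).
  under eq_bigr => j _ do rewrite -[X j]hX1 piM2 hX1 eq_sym.
  rewrite -big_mkcond big_ord1_eq; case: ifP => // /negbT.
  by rewrite -leqNgt => h; rewrite hN.
have [K [k [s [w [hw hx]]]]] := hSG x.
pose z := fun i => monomial Y (s i) vac.
have [E hE] := fin_all_exists (fun i : 'I_K => pi3 (z i)).
pose t := x - \sum_(i < K) k i *: YM (z i) (-1) (w i).
have ht : Cset t.
  rewrite /t hx -sumrB; apply: span_sum => i; rewrite -scalerBr; apply: spanZ.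
  exact: KEY.
have hR : Rep (psi_image piM W) (fun n => \sum_(i < K) \sum_(e < E i)
    k i *: gr_act YM (pi e (z i)) e (psi piM (w i)) n).
  apply: Rep_sum => i; apply: Rep_sum => e; apply: Rep1; first exact: pi_hom.
  by exists (w i); split => //; case: (hw i).
have [K' [k' [a' [i' [g' [hc hF]]]]]] := hR.
exists K', k', a', i', g'; split => // n.
have eZ : piM n (\sum_(i < K) k i *: YM (z i) (-1) (w i)) =
    \sum_(t < K') k' t *: gr_act YM (a' t) (i' t) (g' t) n.
  rewrite -hF (lin_sum (piML _)); apply: eq_bigr => i _.
  by rewrite (linZ (piML _)) (PROJ _ _ (hE i)) scaler_sumr.
have := Cset_low n ht; rewrite /t (linB (piML _)) hxn eZ; exact.
Qed.

Lemma gen_mono (G G' : (nat -> M) -> Prop) : (forall g, G g -> G' g) ->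
  gr_generated_by pi YM piM G -> gr_generated_by pi YM piM G'.
Proof.
move=> hG h X hX; have [K [k [a [i [g [h1 h2]]]]]] := h X hX.
exists K, k, a, i, g; split => // t; case: (h1 t) => ? ?; split => //; exact: hG.
Qed.

Lemma part2 : strongly_fin_generated pi YM -> gr_fin_generated pi YM piM.
Proof.
move=> [S hS]; exists (List.map (psi piM) S); split.
  move=> X /List.in_map_iff [w [<- _]]; split; first by move=> n; rewrite /psi piM_hom.
  have [N hN] := piM3 w; exists N => n hn; rewrite /psi hN (lin_sum (piML _)).
  apply: big1 => j _; rewrite piM2; case: eqP => [h|//]; exfalso.
  by move: (ltn_ord j) hn; rewrite -h; lia.
apply: gen_mono (part1 hS) => g [w [hw ->]]; exact: List.in_map.
Qed.

End Main.

Theorem proposition4p7 (R : realType) (V : lmodType R[i])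
    (Y : V -> int -> V -> V) (vac omega : V) (c : R[i]) (pi : nat -> V -> V)
    (M : lmodType R[i]) (YM : V -> int -> M -> M) (piM : nat -> M -> M) :
  is_VOA_CFT Y vac omega c pi ->
  is_admissible Y vac pi YM piM ->
  (forall W : M -> Prop, strongly_generated pi YM W ->
     gr_generated_by pi YM piM (psi_image piM W)) /\
  (strongly_fin_generated pi YM -> gr_fin_generated pi YM piM).
Proof.
move=> HV HA.
case: HV => [[[pi1 pi2 pi3] [Y1 Y2] _ _] _ [_ Yvac2 Yvac3] _ [_ Hvir HL0 HLm1]].
case: HA => [[[YM1 YM2] _] HvacM Hjac [piM1 piM2 piM3] Hdeg].
split.
  move=> W hW; apply: (part1 _ _ _ _ _ _ _ _ _ _ _ _ _ _ _ _ _ hW); eassumption.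
apply: part2; eassumption.
Qed.
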